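(* For each $i\in\{1,2,3\}$ the points $P_i$, $P_i'$ and $C_2$ are collinear. Consequently the triangles $T=P_1P_2P_3$ and $T'=P_1'P_2'P_3'$ are perspective with perspector $C_2$.
   Context: Let $a>b>0$ and $c>0$ with $c^2=a^2-b^2$. Let $\mathcal{E}$ be the ellipse $x^2/a^2+y^2/b^2=1$, parametrized by $P(t)=(a\cos t,b\sin t)$. Fix $u\in\mathbb{R}$, let $M=(a\cos u,b\sin u)$ and $\Delta_u(t)=(x_u(t),y_u(t))$, where $x_u(t)=\frac1a\big(c^2(1+\cos(t+u))\cos t-a^2\cos u\big)$ and $y_u(t)=\frac1b\big(c^2\cos t\sin(t+u)-c^2\sin t-a^2\sin u\big)$ (the negative pedal curve of $\mathcal{E}$ with respect to $M$). For $i=1,2,3$ let $t_i=-u/3-2\pi(i-1)/3$, $P_i=P(t_i)$, $P_i'=\Delta_u(t_i)$ (the cusps). Let $C_2=\left(-\frac{a^2+b^2}{2a}\cos u,-\frac{a^2+b^2}{2b}\sin u\right)$ (the area centroid of $\Delta_u$). *)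

(* Defs.v *)
From Stdlib Require Import Reals.
Open Scope R_scope.

Definition pt := (R * R)%type.

Definition collinear (A B C : pt) : Prop :=
  (fst B - fst A) * (snd C - snd A) - (snd B - snd A) * (fst C - fst A) = 0.

Definition ellP (a b t : R) : pt := (a * cos t, b * sin t).

(* The negative pedal curve Delta_u(t) of the ellipse w.r.t. M = P(u), c^2 = a^2 - b^2. *)
Definition negpedal (a b c u t : R) : pt :=
  ((c ^ 2 * (1 + cos (t + u)) * cos t - a ^ 2 * cos u) / a,
   (c ^ 2 * cos t * sin (t + u) - c ^ 2 * sin t - a ^ 2 * sin u) / b).

Definition cusp_t (u : R) (i : nat) : R :=
  - u / 3 - 2 * PI * INR (i - 1) / 3.

(* Area centroid C_2 of Delta_u. *)
Definition C2 (a b u : R) : pt :=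
  (- (a ^ 2 + b ^ 2) / (2 * a) * cos u, - (a ^ 2 + b ^ 2) / (2 * b) * sin u).

(* Main.v *)
Require Import Defs.
From Stdlib Require Import Reals Lra Psatz.
Open Scope R_scope.
Lemma key a b x y : a <> 0 -> b <> 0 -> x^2 + y^2 = 1 ->
 collinear (a*x, b*y) ((((a^2-b^2)*(1+(2*x^2-1))*x - a^2*(4*x^3-3*x))/a,
   ((a^2-b^2)*x*(-(2*x*y)) - (a^2-b^2)*y - a^2*(-(3*y-4*y^3)))/b))
  (- (a ^ 2 + b ^ 2) / (2 * a) * (4*x^3-3*x), - (a ^ 2 + b ^ 2) / (2 * b) * (-(3*y-4*y^3))).
Proof.
intros ha hb h. unfold collinear; simpl.
field_simplify; auto.
assert (h0 : x^2+y^2-1 = 0) by lra.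
match goal with |- ?N / _ = 0 => replace N with ((x^2+y^2-1)*(a^4*(-8*x^3*y-4*x*y) + a^2*b^2*(4*x*y) + b^4*(8*x^3*y))) by ring end.
rewrite h0; unfold Rdiv; ring.
Qed.

Theorem proposition8p2 (a b c u : R) :
  a > b -> b > 0 -> c > 0 -> c ^ 2 = a ^ 2 - b ^ 2 ->
  forall i : nat, (1 <= i <= 3)%nat ->
    collinear (ellP a b (cusp_t u i)) (negpedal a b c u (cusp_t u i)) (C2 a b u).
Proof.
intros hab hb hc hc2 i hi.
set (t := cusp_t u i).
assert (hu : exists k : nat, - 3 * t = u + 2 * INR k * PI).
{ exists (i-1)%nat. unfold t, cusp_t. generalize (INR (i-1)). intro r. clear t. field. }
destruct hu as [k hu].
assert (cu : cos u = 4 * cos t ^ 3 - 3 * cos t).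
{ rewrite <- cos_period with (k:=k), <- hu. replace (-3*t) with (-(3*t)) by ring.
  rewrite cos_neg. replace (3*t) with (2*t+t) by ring.
  rewrite cos_plus, cos_2a, sin_2a. pose proof (sin2_cos2 t) as H. unfold Rsqr in *.
  assert (H' : sin t * sin t = 1 - cos t * cos t) by lra.
  replace ((cos t * cos t - sin t * sin t) * cos t - 2 * sin t * cos t * sin t) with (cos t ^3 - 3 * cos t * (sin t * sin t)) by ring. rewrite H'. ring. }
assert (su : sin u = -(3 * sin t - 4 * sin t ^ 3)).
{ rewrite <- sin_period with (k:=k), <- hu. replace (-3*t) with (-(3*t)) by ring.
  rewrite sin_neg. replace (3*t) with (2*t+t) by ring.
  rewrite sin_plus, cos_2a, sin_2a. pose proof (sin2_cos2 t) as H. unfold Rsqr in *.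
  assert (H' : cos t * cos t = 1 - sin t * sin t) by lra.
  replace (- (2 * sin t * cos t * cos t + (cos t * cos t - sin t * sin t) * sin t)) with (-(3 * sin t * (cos t * cos t) - sin t ^ 3)) by ring. rewrite H'. ring. }
assert (e2 : t + u + 2 * INR k * PI = -(2*t)) by lra.
assert (ctu : cos (t+u) = 2 * cos t ^ 2 - 1).
{ rewrite <- cos_period with (k:=k), e2.
  rewrite cos_neg, cos_2a. pose proof (sin2_cos2 t). unfold Rsqr in *. lra. }
assert (stu : sin (t+u) = -(2 * cos t * sin t)).
{ rewrite <- sin_period with (k:=k), e2.
  rewrite sin_neg, sin_2a. ring. }
unfold ellP, negpedal, C2. rewrite cu, su, ctu, stu, hc2.
apply key; try lra.
rewrite <- (sin2_cos2 t); unfold Rsqr; ring.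
Qed.
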